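(* There exist a connected graph $G$ of order $n\geq 2$ and a graph $H$ with connected components $H_1,\dots,H_k$ such that $\chi_L(G\odot H)=\chi_L(G)+\sum_{t=1}^{k}\bigl(\chi_L(H_t+K_1)-1\bigr)$.
   Context: All graphs are finite and simple. A $k$-coloring of a connected graph $G$ is a map $c:V(G)\to\{1,\dots,k\}$ with $c(u)\neq c(v)$ for adjacent $u,v$; it induces the partition $\Pi=\{C_1,\dots,C_k\}$ into color classes $C_i=c^{-1}(i)$. The color code of $v$ is $c_\Pi(v)=(d(v,C_1),\dots,d(v,C_k))$ with $d(v,C_i)=\min\{d(v,x): x\in C_i\}$ (graph distance). $c$ is a locating coloring if distinct vertices have distinct color codes; the locating-chromatic number $\chi_L(G)$ is the least $k$ for which a locating $k$-coloring exists. The corona product $G\odot H$ of a graph $G$ with vertex set $\{a_1,\dots,a_n\}$ and a graph $H$ is obtained from one copy of $G$ and $n$ disjoint copies of $H$ by joining $a_i$ to every vertex of the $i$-th copy of $H$. For a graph $F$, $F+K_1$ denotes the join of $F$ with a single new vertex adjacent to all vertices of $F$. *)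

(* Defs.v *)
From mathcomp Require Import all_boot.
Set Implicit Arguments. Unset Strict Implicit. Unset Printing Implicit Defensive.

Definition simple_graph (T : finType) (e : rel T) : Prop :=
  symmetric e /\ irreflexive e.

Definition connected_graph (T : finType) (e : rel T) : bool :=
  [forall u, forall v, connect e u v].

Fixpoint walkn (T : finType) (e : rel T) (n : nat) (u v : T) : bool :=
  if n is m.+1 then [exists w, e u w && walkn e m w v] else u == v.

(* graph distance: least n with a walk of length n (correct for connected graphs;
   returns #|T| if v is unreachable from u) *)
Definition gdist (T : finType) (e : rel T) (u v : T) : nat :=
  find (fun n => walkn e n u v) (iota 0 #|T|).

Definition dist_class (T : finType) (e : rel T) (k : nat) (c : {ffun T -> 'I_k})
  (v : T) (i : 'I_k) : nat :=
  \big[minn/#|T|]_(x | c x == i) gdist e v x.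

Definition color_code (T : finType) (e : rel T) (k : nat) (c : {ffun T -> 'I_k})
  (v : T) : {ffun 'I_k -> nat} :=
  [ffun i => dist_class e c v i].

Definition proper_coloring (T : finType) (e : rel T) (k : nat) (c : {ffun T -> 'I_k}) : bool :=
  [forall u, forall v, e u v ==> (c u != c v)].

Definition surj_coloring (T : finType) (k : nat) (c : {ffun T -> 'I_k}) : bool :=
  [forall i, exists v, c v == i].

Definition locating_coloring (T : finType) (e : rel T) (k : nat) (c : {ffun T -> 'I_k}) : bool :=
  [&& proper_coloring e c, surj_coloring c & injectiveb (color_code e c)].

Definition has_locating_coloring (T : finType) (e : rel T) (k : nat) : bool :=
  [exists c : {ffun T -> 'I_k}, locating_coloring e c].

(* locating-chromatic number: least k admitting a locating k-coloring
   (for a connected graph on #|T| >= 1 vertices, k = #|T| always works) *)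
Definition chiL (T : finType) (e : rel T) : nat :=
  \big[minn/#|T|]_(k < #|T|.+1 | has_locating_coloring e k) k.

(* corona product G (.) H : vertices inl a (copy of G) and inr (a, x) (x in the a-th copy of H) *)
Definition corona_rel (T S : finType) (eG : rel T) (eH : rel S) : rel (T + T * S) :=
  fun p q =>
    match p, q with
    | inl a, inl b => eG a b
    | inr (a, x), inr (b, y) => (a == b) && eH x y
    | inl a, inr (b, _) => a == b
    | inr (a, _), inl b => a == b
    end.

Definition components (S : finType) (eH : rel S) : {set {set S}} :=
  [set [set y | connect eH x y] | x : S].

(* H_C + K_1 : the component induced on C, joined with a new vertex None *)
Definition join_K1_rel (S : finType) (eH : rel S) (C : {set S}) :
  rel (option {x : S | x \in C}) :=
  fun p q =>
    match p, q with
    | None, None => false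
    | None, Some _ => true
    | Some _, None => true
    | Some a, Some b => eH (val a) (val b)
    end.

Arguments join_K1_rel [S] eH C _ _.

(* Main.v *)
Require Import Defs.
From mathcomp Require Import all_boot.
Set Implicit Arguments. Unset Strict Implicit.
From HB Require Import structures.
HB.instance Definition _ := SemiGroup.isComLaw.Build nat minn minnA minnC.

Section Gen.
Variables (T : finType) (e : rel T).

Lemma gdist0 u : 0 < #|T| -> gdist e u u = 0.
Proof. by rewrite /gdist; case: #|T| => // n _ /=; rewrite eqxx. Qed.

Lemma gdist_ge1 u v : 0 < #|T| -> u != v -> 0 < gdist e u v.
Proof. by rewrite /gdist; case: #|T| => // n _ Huv /=; rewrite (negbTE Huv). Qed.

Lemma gdist1 u v : 1 < #|T| -> u != v -> e u v -> gdist e u v = 1.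
Proof.
rewrite /gdist; case: #|T| => [|[|n]] // _ Huv He /=; rewrite (negbTE Huv).
suff -> : [exists w, e u w && (w == v)] by [].
by apply/existsP; exists v; rewrite He eqxx.
Qed.

Lemma gdist_ge2 u v : 1 < #|T| -> u != v -> ~~ e u v -> 1 < gdist e u v.
Proof.
rewrite /gdist; case: #|T| => [|[|n]] // _ Huv He /=; rewrite (negbTE Huv).
suff -> : [exists w, e u w && (w == v)] = false by [].
apply/existsP => -[w /andP [H /eqP Hw]]; subst w; by rewrite H in He.
Qed.

Variables (k : nat) (c : {ffun T -> 'I_k}).

Lemma code_zero v : dist_class e c v (c v) = 0.
Proof.
have HT : 0 < #|T| by apply/card_gt0P; exists v.
by rewrite /dist_class (bigD1 v) //= gdist0 // min0n.
Qed.

Lemma code_pos v i : i != c v -> 0 < dist_class e c v i.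
Proof.
move=> Hi; have HT : 0 < #|T| by apply/card_gt0P; exists v.
rewrite /dist_class; apply: (big_ind (fun x => 0 < x)) => //.
  by move=> x y Hx Hy; rewrite leq_min Hx Hy.
move=> x /eqP Hx; apply: gdist_ge1 => //; apply/eqP => Hvx; subst x.
by rewrite Hx eqxx in Hi.
Qed.

Lemma code_color u v : color_code e c u = color_code e c v -> c u = c v.
Proof.
move=> H; apply/eqP; apply/negPn/negP => Hn.
have := congr1 (fun f : {ffun _ -> nat} => f (c u)) H; rewrite !ffunE code_zero => H0.
by have := code_pos Hn; rewrite -H0.
Qed.

Lemma code_one v w i : 1 < #|T| -> c w = i -> e v w -> c v != i ->
  dist_class e c v i = 1.
Proof.
move=> HT Hw Hvw Hv; apply/eqP; rewrite eqn_leq; apply/andP; split.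
  rewrite /dist_class (bigD1 w) /=; last by rewrite Hw.
  rewrite gdist1 //; last by apply/eqP => E; subst; rewrite eqxx in Hv.
  exact: geq_minl.
apply: code_pos; by rewrite eq_sym.
Qed.

Lemma code_one_adj v i : 1 < #|T| -> dist_class e c v i = 1 ->
  exists w, c w = i /\ e v w.
Proof.
move=> HT H.
case: (boolP (c v == i)) => Hv.
  by move/eqP: Hv H => <-; rewrite code_zero.
case: (boolP [exists w, (c w == i) && e v w]).
  by case/existsP => w /andP [/eqP ? ?]; exists w.
move=> Hn; suff: 1 < dist_class e c v i by rewrite H.
rewrite /dist_class; apply: (big_ind (fun x => 1 < x)) => //.
  by move=> x y Hx Hy; rewrite leq_min Hx Hy.
move=> x Hx; apply: gdist_ge2 => //.
  by apply/eqP => E; subst x; rewrite Hx in Hv.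
apply/negP => Hvx; move/existsP: Hn; apply; exists x; by rewrite Hx Hvx.
Qed.

Lemma inj_code : injective c -> injectiveb (color_code e c).
Proof. by move=> Hc; apply/injectiveP => u v /code_color /Hc. Qed.

End Gen.

Lemma chiL_eq (T : finType) (e : rel T) m : m <= #|T| -> has_locating_coloring e m ->
  (forall k, k < m -> ~~ has_locating_coloring e k) -> chiL e = m.
Proof.
move=> Hm Hy Hn; apply/eqP; rewrite eqn_leq; apply/andP; split.
  have Hm' : m < #|T|.+1 by [].
  by rewrite /chiL (bigD1 (Ordinal Hm')) //=; apply: geq_minl.
rewrite /chiL; apply: (big_ind (fun x => m <= x)) => //.
  by move=> x y Hx Hy'; rewrite leq_min Hx Hy'.
move=> i Hi; rewrite leqNgt; apply/negP => Hlt.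
by move: (Hn _ Hlt); rewrite Hi.
Qed.

Lemma no_loc01 (T : finType) (e : rel T) u v k : e u v -> k <= 1 ->
  ~~ has_locating_coloring e k.
Proof.
move=> Huv Hk; apply/existsP => -[c /and3P [Hp _ _]].
move/forallP: Hp => /(_ u) /forallP /(_ v) /implyP /(_ Huv).
case: k Hk c => [|[|//]] _ c; first by case: (c u).
case: (c u) => [[|//] ?]; case: (c v) => [[|//] ?]; by [].
Qed.

Definition eG : rel bool := fun a b => a != b.
Definition eH : rel unit := fun _ _ => false.
Notation CT := (bool + bool * unit)%type.
Definition eC := corona_rel eG eH.

Definition o3 (n : nat) (H : n < 3) : 'I_3 := Ordinal H.
Definition c3f (p : CT) : 'I_3 :=
  match p with inl false => @Ordinal 3 1 isT | inl true => @Ordinal 3 2 isT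
  | inr _ => @Ordinal 3 0 isT end.
Definition c3 : {ffun CT -> 'I_3} := [ffun p => c3f p].

Lemma cardCT : #|{: CT}| = 4.
Proof. by rewrite card_sum card_prod card_bool card_unit. Qed.

Lemma loc3 : has_locating_coloring eC 3.
Proof.
apply/existsP; exists c3; apply/and3P; split.
- apply/forallP => u; apply/forallP => v; apply/implyP.
  by case: u => [[]|[[] []]]; case: v => [[]|[[] []]]; rewrite !ffunE.
- apply/forallP => -[[|[|[|//]]] Hi].
  + by apply/existsP; exists (inr (false, tt)); rewrite ffunE.
  + by apply/existsP; exists (inl false); rewrite ffunE.
  + by apply/existsP; exists (inl true); rewrite ffunE.
- apply/injectiveP => u v H; have Hc := code_color H.
  have HT : 1 < #|{: CT}| by rewrite cardCT.
  have K1 : dist_class eC c3 (inr (false, tt)) (@Ordinal 3 1 isT) = 1.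
    by apply: (@code_one _ _ _ _ _ (inl false)) => //; rewrite ffunE.
  have K2 : dist_class eC c3 (inr (true, tt)) (@Ordinal 3 1 isT) != 1.
    apply/negP => /eqP H1; have [w [Hw Hew]] := code_one_adj HT H1.
    by move: Hw Hew; case: w => [[]|[[] []]]; rewrite ffunE.
  move: u v H Hc => [[]|[[] []]] [[]|[[] []]] H; rewrite !ffunE //= => Hc.
  + have := congr1 (fun f : {ffun _ -> nat} => f (@Ordinal 3 1 isT)) H.
    rewrite !ffunE K1 => E; exfalso; move/eqP: K2; apply; first [by rewrite E | by rewrite -E].
  + have := congr1 (fun f : {ffun _ -> nat} => f (@Ordinal 3 1 isT)) H.
    rewrite !ffunE K1 => E; exfalso; move/eqP: K2; apply; first [by rewrite E | by rewrite -E].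
Qed.

Lemma I2_eq (x y z : 'I_2) : x != y -> y != z -> x = z.
Proof.
by case: x => [[|[|//]] ?]; case: y => [[|[|//]] ?]; case: z => [[|[|//]] ?];
  rewrite // => _ _; apply/val_inj.
Qed.

Lemma noloc2 : ~~ has_locating_coloring eC 2.
Proof.
apply/existsP => -[c /and3P [Hp _ Hi]].
have HT : 1 < #|{: CT}| by rewrite cardCT.
set p : CT := inr (false, tt); set q : CT := inl false; set r : CT := inl true.
have E : forall u v, eC u v -> c u != c v.
  by move=> u v Huv; move/forallP: Hp => /(_ u) /forallP /(_ v) /implyP; apply.
have Hpq : c p != c q by apply: E.
have Hqr : c q != c r by apply: E.
have Hpr := I2_eq Hpq Hqr.
suff : color_code eC c p = color_code eC c r by move/(injectiveP _ Hi).
apply/ffunP => i; rewrite !ffunE.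
case: (boolP (i == c p)) => [/eqP ->|Hip].
  by rewrite {2}Hpr !code_zero.
have Hiq := I2_eq Hip Hpq.
have Hqi : c q = i by rewrite Hiq.
have Hpi : c p != i by rewrite Hiq.
have Hri : c r != i by rewrite Hiq -Hpr.
by rewrite (@code_one _ _ _ _ _ q) // (@code_one _ _ _ _ _ q).
Qed.

Lemma chiL_C : chiL eC = 3.
Proof.
apply: chiL_eq; first by rewrite cardCT.
  exact: loc3.
move=> k; rewrite ltnS leq_eqVlt => /orP [/eqP -> | Hk]; first exact: noloc2.
by apply: (@no_loc01 _ _ (inl false) (inl true)).
Qed.

Lemma chiL_G : chiL eG = 2.
Proof.
apply: chiL_eq; first by rewrite card_bool.
  apply/existsP; exists [ffun b : bool => if b then @Ordinal 2 1 isT else @Ordinal 2 0 isT].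
  apply/and3P; split.
  - apply/forallP => u; apply/forallP => v; apply/implyP.
    by case: u; case: v; rewrite !ffunE.
  - apply/forallP => -[[|[|//]] Hi].
    + by apply/existsP; exists false; rewrite ffunE.
    + by apply/existsP; exists true; rewrite ffunE.
  - by apply: inj_code => u v; rewrite !ffunE; case: u; case: v.
move=> k Hk; by apply: (@no_loc01 _ _ false true).
Qed.

Lemma chiL_J (C : {set unit}) : tt \in C -> chiL (join_K1_rel eH C) = 2.
Proof.
move=> HC.
have s : {x : unit | x \in C} by exists tt.
apply: chiL_eq.
- rewrite card_option ltnS; apply/card_gt0P; by exists s.
- apply/existsP; exists [ffun o : option {x : unit | x \in C} =>
     if o is None then @Ordinal 2 0 isT else @Ordinal 2 1 isT].
  apply/and3P; split.
  + apply/forallP => u; apply/forallP => v; apply/implyP.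
    by case: u => [?|]; case: v => [?|]; rewrite !ffunE.
  + apply/forallP => -[[|[|//]] Hi].
    * by apply/existsP; exists None; rewrite ffunE.
    * by apply/existsP; exists (Some s); rewrite ffunE.
  + apply: inj_code => u v; rewrite !ffunE.
    case: u => [a|]; case: v => [b|] //= _.
    by congr Some; apply/val_inj; case: (val a); case: (val b).
- move=> k Hk; by apply: (@no_loc01 _ _ None (Some s)).
Qed.

Lemma comp_eH : components eH = [set [set: unit]].
Proof.
apply/setP => C; rewrite !inE; apply/imsetP/eqP => [[x _ ->]|->].
  by apply/setP => y; rewrite !inE; case: x; case: y; rewrite connect0.
exists tt => //; apply/setP => y; rewrite !inE; case: y; by rewrite connect0.
Qed.

Theorem theorem3 :
  exists (T S : finType) (eG : rel T) (eH : rel S),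
    simple_graph eG /\ connected_graph eG /\ 2 <= #|T| /\
    simple_graph eH /\ 0 < #|S| /\
    chiL (corona_rel eG eH) =
      chiL eG + \sum_(C in components eH) (chiL (join_K1_rel eH C) - 1).
Proof.
exists bool, unit, eG, eH; split; [|split; [|split; [|split; [|split]]]].
- by split; [move=> a b; rewrite /eG eq_sym | move=> a; rewrite /eG eqxx].
- apply/forallP => u; apply/forallP => v.
  by case: u; case: v; rewrite ?connect0 //; apply: connect1.
- by rewrite card_bool.
- by split; [move=> a b | move=> a].
- by rewrite card_unit.
- rewrite comp_eH big_set1 chiL_J ?inE //.
  by have := chiL_C; rewrite /eC => ->; rewrite chiL_G.
Qed.
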